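(* Let $D$ be a digraph rooted at $r$ and let $v \in V(D) \setminus \{r\}$. For every $I \in \mathcal{G}_{D - rv}(v)$ and every $S \in \mathfrak{S}_D(v)$ there is an $\mathcal{R} \in \mathfrak{P}_D(v)$ orthogonal to $S$ with $I \subseteq E^+(\mathcal{R})$.
   Context: Digraphs have no loops or parallel edges; $D - rv$ denotes $D$ with the edge $rv$ deleted if present. For a vertex $v$ of a digraph $H$, $\mathrm{in}_H(v)$ is the set of edges with head $v$. An $(x,y)$-path is a directed path from $x$ to $y$; an $(x,y)$-path-system is a set of pairwise internally disjoint $(x,y)$-paths. $E^+(\mathcal{P})$ is the set of terminal edges of the paths in $\mathcal{P}$. For a rooted digraph $H$ with root $r$, $\mathcal{G}_H(v)$ is the set of all $I \subseteq \mathrm{in}_H(v)$ for which there is an $(r,v)$-path-system $\mathcal{P}$ in $H$ with $E^+(\mathcal{P}) = I$. For distinct $x,y$ with $xy \notin E$, an $(x,y)$-separation is a set $S \subseteq V \setminus\{x,y\}$ meeting every $(x,y)$-path. A set of paths $\mathcal{P}$ and a vertex set $S$ are orthogonal if each path of $\mathcal{P}$ meets $S$ in exactly one vertex and $S \subseteq \bigcup_{P \in \mathcal{P}} V(P)$. An $(x,y)$-path-system (resp. $(x,y)$-separation) is Erdős–Menger if there is an $(x,y)$-separation (resp. $(x,y)$-path-system) orthogonal to it. $\mathfrak{P}_D(v)$ and $\mathfrak{S}_D(v)$ denote the sets of Erdős–Menger $(r,v)$-path-systems and Erdős–Menger $(r,v)$-separations, respectively, in $D - rv$. *)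

(* Defs.v *)
(* Digraphs on an arbitrary (possibly infinite) vertex type V,
   given by an edge relation E : V -> V -> Prop (no parallel edges by
   construction; looplessness is a separate hypothesis).  Edges are pairs
   (tail, head). *)
From Stdlib Require Import List.
Import ListNotations.

Section Digraphs.
Context {V : Type}.

Definition loopless (E : V -> V -> Prop) : Prop := forall x, ~ E x x.

Definition del_edge (E : V -> V -> Prop) (r v : V) : V -> V -> Prop :=
  fun a b => E a b /\ ~ (a = r /\ b = v).

Fixpoint chain (E : V -> V -> Prop) (p : list V) : Prop :=
  match p with
  | a :: ((b :: _) as q) => E a b /\ chain E q
  | _ => True
  end.

Definition is_path (E : V -> V -> Prop) (x y : V) (p : list V) : Prop :=
  hd_error p = Some x /\ last p x = y /\ chain E p /\ NoDup p.

Definition path_system (E : V -> V -> Prop) (x y : V) (P : list V -> Prop) : Prop :=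
  (forall p, P p -> is_path E x y p) /\
  (forall p q z, P p -> P q -> p <> q -> In z p -> In z q -> z = x \/ z = y).

Definition terminal_edge (p : list V) (e : V * V) : Prop :=
  exists q, p = q ++ [fst e; snd e].

Definition Eplus (P : list V -> Prop) (e : V * V) : Prop :=
  exists p, P p /\ terminal_edge p e.

Definition calG (H : V -> V -> Prop) (r v : V) (I : V * V -> Prop) : Prop :=
  (forall e, I e -> snd e = v /\ H (fst e) (snd e)) /\
  exists P, path_system H r v P /\ forall e, I e <-> Eplus P e.

Definition separation (E : V -> V -> Prop) (x y : V) (S : V -> Prop) : Prop :=
  x <> y /\ ~ E x y /\
  (forall z, S z -> z <> x /\ z <> y) /\
  (forall p, is_path E x y p -> exists z, In z p /\ S z).

Definition orthogonal (P : list V -> Prop) (S : V -> Prop) : Prop :=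
  (forall p, P p -> exists! z, In z p /\ S z) /\
  (forall z, S z -> exists p, P p /\ In z p).

Definition EM_path_system (E : V -> V -> Prop) (x y : V) (P : list V -> Prop) : Prop :=
  path_system E x y P /\ exists S, separation E x y S /\ orthogonal P S.

Definition EM_separation (E : V -> V -> Prop) (x y : V) (S : V -> Prop) : Prop :=
  separation E x y S /\ exists P, path_system E x y P /\ orthogonal P S.

Definition frakP (E : V -> V -> Prop) (r v : V) (P : list V -> Prop) : Prop :=
  EM_path_system (del_edge E r v) r v P.

Definition frakS (E : V -> V -> Prop) (r v : V) (S : V -> Prop) : Prop :=
  EM_separation (del_edge E r v) r v S.

End Digraphs.

(* Main.v *)
Require Import Defs.
From Stdlib Require Import List Lia Classical ClassicalEpsilon Arith.
Import ListNotations.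

Section Gen.
Context {V : Type}.

Lemma nth_nil (i : nat) : nth_error (@nil V) i = None.
Proof. destruct i; reflexivity. Qed.

Lemma chain_nth (G : V -> V -> Prop) (p : list V) :
  chain G p <-> forall i a b, nth_error p i = Some a -> nth_error p (S i) = Some b -> G a b.
Proof.
  induction p as [|x p IH].
  - simpl. split; auto. intros _ i a b H. rewrite nth_nil in H. discriminate.
  - destruct p as [|y p'].
    + simpl. split; auto. intros _ i a b _ H. simpl in H. rewrite nth_nil in H. discriminate.
    + change (chain G (x :: y :: p')) with (G x y /\ chain G (y :: p')).
      rewrite IH. split.
      * intros [Hxy Hc] i a b Ha Hb. destruct i as [|i].
        -- simpl in Ha, Hb. inversion Ha; inversion Hb; subst; auto.
        -- simpl in Ha, Hb. eapply Hc; eauto.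
      * intros Hc. split.
        -- apply (Hc 0); reflexivity.
        -- intros i a b Ha Hb. apply (Hc (S i)); simpl; auto.
Qed.

Lemma last_nth (l : list V) d : l <> [] -> nth_error l (length l - 1) = Some (last l d).
Proof.
  induction l as [|x l IH]; intros H; [congruence|].
  destruct l as [|y l].
  - reflexivity.
  - assert (H2 : nth_error (y :: l) (length (y :: l) - 1) = Some (last (y :: l) d)) by (apply IH; congruence).
    simpl in H2 |- *. rewrite Nat.sub_0_r in H2. exact H2.
Qed.

Lemma path_nth (G : V -> V -> Prop) (x y : V) (p : list V) : is_path G x y p <->
  (nth_error p 0 = Some x /\ nth_error p (length p - 1) = Some y /\
   (forall i a b, nth_error p i = Some a -> nth_error p (S i) = Some b -> G a b) /\ NoDup p).
Proof.
  unfold is_path. rewrite chain_nth. rewrite nth_error_0.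
  split.
  - intros [H1 [H2 [H3 H4]]]. repeat split; auto.
    rewrite last_nth with (d := x). congruence. intro; subst; discriminate.
  - intros [H1 [H2 [H3 H4]]]. repeat split; auto.
    assert (Hne : p <> []) by (intro; subst; discriminate).
    rewrite (last_nth p x Hne) in H2. congruence.
Qed.

Lemma nodup_idx (l : list V) i j z : NoDup l -> nth_error l i = Some z -> nth_error l j = Some z -> i = j.
Proof.
  intros Hn Hi Hj. apply (proj1 (NoDup_nth_error l)) with (i := i) (j := j); auto.
  apply nth_error_Some. congruence. congruence.
Qed.

Lemma in_firstn_iff (l : list V) n z : In z (firstn n l) <-> exists i, i < n /\ nth_error l i = Some z.
Proof.
  split.
  - intros H. apply In_nth_error in H as [i Hi]. rewrite nth_error_firstn in Hi.
    destruct (Nat.ltb_spec i n); [|discriminate]. eauto.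
  - intros [i [Hi Hz]]. apply nth_error_In with (n := i). rewrite nth_error_firstn.
    destruct (Nat.ltb_spec i n); [auto|lia].
Qed.

Lemma in_skipn_iff (l : list V) n z : In z (skipn n l) <-> exists i, n <= i /\ nth_error l i = Some z.
Proof.
  split.
  - intros H. apply In_nth_error in H as [i Hi]. rewrite nth_error_skipn in Hi.
    exists (n + i). split; auto; lia.
  - intros [i [Hi Hz]]. apply nth_error_In with (n := i - n). rewrite nth_error_skipn.
    replace (n + (i - n)) with i by lia. auto.
Qed.

Lemma nth_some_lt (l : list V) i z : nth_error l i = Some z -> i < length l.
Proof. intros H. apply nth_error_Some. congruence. Qed.

Lemma least_ex (T : nat -> Prop) : (exists n, T n) -> exists n, T n /\ forall m, m < n -> ~ T m.
Proof.
  intros [n Hn]. revert Hn. induction n as [n IH] using (well_founded_induction lt_wf).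
  intros Hn. destruct (classic (exists m, m < n /\ T m)) as [[m [Hm Tm]]|Hno].
  - apply (IH m Hm Tm).
  - exists n. split; auto. intros m Hm Tm. apply Hno; eauto.
Qed.

Fixpoint maxk (T : nat -> Prop) (n d : nat) : nat :=
  match n with
  | 0 => d
  | S m => if excluded_middle_informative (T m) then m else maxk T m d
  end.

Lemma maxk_spec T n d :
  (maxk T n d = d /\ forall k, k < n -> ~ T k) \/
  (T (maxk T n d) /\ maxk T n d < n /\ forall k, maxk T n d < k < n -> ~ T k).
Proof.
  induction n as [|n IH]; simpl.
  - left. split; auto. intros; lia.
  - destruct (excluded_middle_informative (T n)) as [Tn|Tn].
    + right. repeat split; auto. intros; lia.
    + destruct IH as [[H1 H2]|[H1 [H2 H3]]].
      * left. split; auto. intros k Hk. destruct (Nat.eq_dec k n); [subst; auto|apply H2; lia].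
      * right. repeat split; auto. intros k Hk. destruct (Nat.eq_dec k n); [subst; auto|apply H3; lia].
Qed.

Lemma maxk_ge T n d k : k < n -> T k -> k <= maxk T n d.
Proof.
  intros Hk Tk. destruct (maxk_spec T n d) as [[_ H]|[_ [_ H]]].
  - exfalso; eapply H; eauto.
  - destruct (Nat.le_gt_cases k (maxk T n d)); auto. exfalso; apply (H k); auto.
Qed.

Lemma mono_stab (f : nat -> nat) B : (forall n, f n <= f (S n)) -> (forall n, f n <= B) ->
  exists N, forall n, N <= n -> f n = f N.
Proof.
  intros Hm Hb.
  assert (Hmono : forall n m, n <= m -> f n <= f m).
  { intros n m H. induction H; auto. eapply Nat.le_trans; eauto. }
  assert (K : forall d N, B - f N <= d -> exists N', forall n, N' <= n -> f n = f N').
  { induction d as [|d IH]; intros N HN.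
    - exists N. intros n Hn. specialize (Hmono _ _ Hn). specialize (Hb n). lia.
    - destruct (classic (exists m, N <= m /\ f N < f m)) as [[m [Hm1 Hm2]]|Hno].
      + apply (IH m). specialize (Hb m). lia.
      + exists N. intros n Hn. specialize (Hmono _ _ Hn).
        destruct (Nat.eq_dec (f n) (f N)); auto. exfalso. apply Hno. exists n. split; auto; lia. }
  apply (K (B - f 0) 0). lia.
Qed.

End Gen.

Section Main.
Context {V : Type} (G : V -> V -> Prop) (r v : V) (Hrv : r <> v)
  (SS : V -> Prop) (HSsep : separation G r v SS)
  (Q : list V -> Prop) (HQ : path_system G r v Q) (HQS : orthogonal Q SS)
  (P : list V -> Prop) (HP : path_system G r v P).

Lemma pf p : is_path G r v p ->
  nth_error p 0 = Some r /\ nth_error p (length p - 1) = Some v /\ NoDup p /\ 1 < length p.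
Proof.
  intros H. apply path_nth in H as [H0 [H1 [_ H3]]]. repeat split; auto.
  destruct (Nat.lt_ge_cases 1 (length p)) as [h|h]; auto.
  exfalso. apply Hrv. assert (length p - 1 = 0) by lia. rewrite H in H1. congruence.
Qed.

Lemma v_idx p i : is_path G r v p -> nth_error p i = Some v -> i = length p - 1.
Proof. intros H Hi. destruct (pf p H) as [_ [H1 [H2 _]]]. eapply nodup_idx; eauto. Qed.

Lemma r_idx p i : is_path G r v p -> nth_error p i = Some r -> i = 0.
Proof. intros H Hi. destruct (pf p H) as [H1 [_ [H2 _]]]. eapply nodup_idx; eauto. Qed.

Lemma Ppath u : P u -> is_path G r v u.
Proof. intros; apply HP; auto. Qed.
Lemma Qpath u : Q u -> is_path G r v u.
Proof. intros; apply HQ; auto. Qed.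

Lemma q_S_unique q z1 z2 : Q q -> In z1 q -> SS z1 -> In z2 q -> SS z2 -> z1 = z2.
Proof.
  intros Hq H1 H2 H3 H4. destruct (proj1 HQS q Hq) as [z [_ Hz]].
  rewrite <- (Hz z1), <- (Hz z2); auto.
Qed.

Lemma on_u_unique u1 u2 k1 k2 w : P u1 -> P u2 -> nth_error u1 k1 = Some w ->
  nth_error u2 k2 = Some w -> w <> r -> w <> v -> u1 = u2 /\ k1 = k2.
Proof.
  intros P1 P2 H1 H2 Hr Hv.
  destruct (classic (u1 = u2)) as [e|ne].
  - subst. split; auto. eapply nodup_idx; eauto. apply (pf _ (Ppath _ P2)).
  - exfalso. destruct (proj2 HP u1 u2 w P1 P2 ne) as [h|h]; auto;
    eapply nth_error_In; eauto.
Qed.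

Definition F (x : list V -> nat) (w : V) :=
  exists u k, P u /\ x u <= k /\ k < length u - 1 /\ nth_error u k = Some w.
Definition target x w := w = v \/ F x w.
Definition first_hit x q j w := nth_error q j = Some w /\ target x w /\
  forall i w', i < j -> nth_error q i = Some w' -> ~ target x w'.
Definition hitpt x u k := exists q j w, Q q /\ nth_error u k = Some w /\ first_hit x q j w.
Definition a (u : list V) := maxk (fun k => exists w, nth_error u k = Some w /\ SS w) (length u) 0.
Definition Phi x u := maxk (fun k => x u <= k /\ k < length u - 1 /\ hitpt x u k) (length u) (x u).
Fixpoint xs n := match n with 0 => a | S n => Phi (xs n) end.

Lemma a_spec u : P u -> 1 <= a u /\ a u < length u - 1 /\
  (exists s, nth_error u (a u) = Some s /\ SS s) /\
  forall k s, nth_error u k = Some s -> SS s -> k <= a u.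
Proof.
  intros Pu. pose proof (Ppath u Pu) as Hu.
  destruct (proj2 (proj2 (proj2 HSsep)) u Hu) as [z [Hz Sz]].
  apply In_nth_error in Hz as [k0 Hk0].
  assert (Hmax : forall k s, nth_error u k = Some s -> SS s -> k <= a u).
  { intros k s Hk Sk. unfold a. apply maxk_ge; eauto. eapply nth_some_lt; eauto. }
  unfold a in *. destruct (maxk_spec (fun k => exists w, nth_error u k = Some w /\ SS w) (length u) 0)
    as [[_ H]|[[s [Hs Ss]] [Hlt _]]].
  - exfalso. apply (H k0). eapply nth_some_lt; eauto. eauto.
  - destruct (proj1 (proj2 (proj2 HSsep)) s Ss) as [sr sv].
    repeat split; eauto.
    + destruct (maxk _ (length u) 0) eqn:E0; [|lia]. exfalso. apply sr.
      pose proof (pf u Hu) as [h _]. congruence.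
    + assert (maxk (fun k => exists w, nth_error u k = Some w /\ SS w) (length u) 0 <> length u - 1).
      { intro e. rewrite e in Hs. pose proof (pf u Hu) as [_ [h _]]. congruence. }
      lia.
Qed.

Definition Bnd x := forall u, P u -> a u <= x u /\ x u < length u - 1.

Lemma Phi_ge x u : x u <= Phi x u.
Proof.
  unfold Phi. destruct (maxk_spec (fun k => x u <= k /\ k < length u - 1 /\ hitpt x u k) (length u) (x u))
    as [[h _]|[[h _] _]]; lia.
Qed.

Lemma Phi_bnd x : Bnd x -> Bnd (Phi x).
Proof.
  intros B u Pu. specialize (B u Pu). pose proof (Phi_ge x u). split; [lia|].
  unfold Phi in *. destruct (maxk_spec (fun k => x u <= k /\ k < length u - 1 /\ hitpt x u k) (length u) (x u))
    as [[h _]|[[_ [h _]] _]]; lia.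
Qed.

Lemma Phi_le x u : Phi x u <= x u + length u.
Proof.
  unfold Phi. destruct (maxk_spec (fun k => x u <= k /\ k < length u - 1 /\ hitpt x u k) (length u) (x u))
    as [[h _]|[_ [h _]]]; lia.
Qed.

Lemma xs_bnd n : Bnd (xs n).
Proof.
  induction n as [|n IH]; simpl.
  - intros u Pu. pose proof (a_spec u Pu). lia.
  - apply Phi_bnd; auto.
Qed.

Lemma xs_mono n m u : n <= m -> xs n u <= xs m u.
Proof.
  induction 1; auto. eapply Nat.le_trans; eauto. apply Phi_ge.
Qed.

Lemma xs_ub n u : xs n u <= a u + length u.
Proof.
  induction n as [|n IH]; simpl.
  - lia.
  - unfold Phi. destruct (maxk_spec (fun k => xs n u <= k /\ k < length u - 1 /\ hitpt (xs n) u k) (length u) (xs n u))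
    as [[h _]|[_ [h _]]]; lia.
Qed.

Lemma stab u : exists N, forall n, N <= n -> xs n u = xs N u.
Proof.
  apply (mono_stab (fun n => xs n u) (a u + length u)).
  - intros n. apply xs_mono. lia.
  - intros n. apply xs_ub.
Qed.

Definition Nf u := proj1_sig (constructive_indefinite_description _ (stab u)).
Definition xinf u := xs (Nf u) u.

Lemma xinf_eq u n : Nf u <= n -> xs n u = xinf u.
Proof.
  unfold xinf, Nf. destruct (constructive_indefinite_description _ (stab u)) as [N HN]. simpl. auto.
Qed.

Lemma xs_le_xinf n u : xs n u <= xinf u.
Proof.
  destruct (Nat.le_gt_cases n (Nf u)).
  - unfold xinf. apply xs_mono; auto.
  - rewrite xinf_eq; auto. lia.
Qed.

Lemma xinf_bnd : Bnd xinf.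
Proof. intros u Pu. unfold xinf. apply xs_bnd; auto. Qed.

Lemma F_anti x y w : (forall u, x u <= y u) -> F y w -> F x w.
Proof.
  intros Hxy [u [k [Pu [h1 [h2 h3]]]]]. exists u, k. repeat split; auto.
  specialize (Hxy u). lia.
Qed.

Lemma hit_mono x y q j w : (forall u, x u <= y u) -> first_hit x q j w -> target y w -> first_hit y q j w.
Proof.
  intros Hxy [h1 [h2 h3]] Ht. repeat split; auto.
  intros i w' Hi Hw' [e|Hf]; apply (h3 i w' Hi Hw'); [left; auto|right; eapply F_anti; eauto].
Qed.

Lemma F_nrv x w : Bnd x -> F x w -> w <> r /\ w <> v.
Proof.
  intros B [u [k [Pu [h1 [h2 h3]]]]]. pose proof (B u Pu). pose proof (a_spec u Pu).
  split; intro e; subst.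
  - apply r_idx in h3; [lia|]. apply Ppath; auto.
  - apply v_idx in h3; [lia|]. apply Ppath; auto.
Qed.


Lemma glue_nth (q u : list V) j k i : j <= length q ->
  nth_error (firstn j q ++ skipn k u) i =
  if Nat.ltb i j then nth_error q i else nth_error u (k + (i - j)).
Proof.
  intros Hj. rewrite nth_error_app. rewrite firstn_length_le by auto.
  destruct (Nat.ltb_spec i j).
  - rewrite nth_error_firstn. destruct (Nat.ltb_spec i j); [auto|lia].
  - rewrite nth_error_skipn. auto.
Qed.

Lemma nodup_firstn (l : list V) n : NoDup l -> NoDup (firstn n l).
Proof. intros H. rewrite <- (firstn_skipn n l) in H. eapply NoDup_app_remove_r; eauto. Qed.
Lemma nodup_skipn (l : list V) n : NoDup l -> NoDup (skipn n l).
Proof. intros H. rewrite <- (firstn_skipn n l) in H. eapply NoDup_app_remove_l; eauto. Qed.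

Lemma glue_path q u j k w : is_path G r v q -> is_path G r v u ->
  nth_error q j = Some w -> nth_error u k = Some w -> 0 < j ->
  (forall z, In z (firstn j q) -> In z (skipn k u) -> False) ->
  is_path G r v (firstn j q ++ skipn k u).
Proof.
  intros Hq Hu Hqj Huk Hj Hdis.
  pose proof (nth_some_lt _ _ _ Hqj) as Ljq. pose proof (nth_some_lt _ _ _ Huk) as Lku.
  pose proof (pf q Hq) as [q0 [ql [qnd ql1]]]. pose proof (pf u Hu) as [u0 [ul [und ul1]]].
  apply path_nth in Hq as [_ [_ [qc _]]]. apply path_nth in Hu as [_ [_ [uc _]]].
  apply path_nth. rewrite length_app, firstn_length_le, length_skipn by lia.
  repeat split.
  - rewrite glue_nth by lia. destruct (Nat.ltb_spec 0 j); [auto|lia].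
  - rewrite glue_nth by lia. destruct (Nat.ltb_spec (j + (length u - k) - 1) j); [lia|].
    replace (k + (j + (length u - k) - 1 - j)) with (length u - 1) by lia. auto.
  - intros i x y Hx Hy. rewrite glue_nth in Hx, Hy by lia.
    destruct (Nat.ltb_spec i j); destruct (Nat.ltb_spec (S i) j).
    + eapply qc; eauto.
    + replace (k + (S i - j)) with k in Hy by lia. eapply qc; eauto.
      replace (S i) with j by lia. congruence.
    + lia.
    + eapply uc; eauto. replace (S (k + (i - j))) with (k + (S i - j)) by lia. auto.
  - apply NoDup_app; [apply nodup_firstn; auto|apply nodup_skipn; auto|].
    intros z h1 h2; eapply Hdis; eauto.
Qed.

Lemma rs_core q j s i w' u k : Q q -> nth_error q j = Some s -> SS s -> i < j ->
  nth_error q i = Some w' -> P u -> a u <= k -> k < length u - 1 -> nth_error u k = Some w' -> False.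
Proof.
  intros Qq Hs Ss Hij Hw' Pu Hak Hkl Hk.
  pose proof (Qpath q Qq) as Hq. pose proof (Ppath u Pu) as Hu.
  pose proof (a_spec u Pu) as [a1 [a2 [_ amax]]].
  destruct (least_ex (fun i0 => exists k0 w0, a u <= k0 /\ k0 < length u - 1 /\
      nth_error u k0 = Some w0 /\ nth_error q i0 = Some w0)) as [i0 [[k0 [w0 [h1 [h2 [h3 h4]]]]] hmin]].
  { exists i, k, w'. auto. }
  assert (Hi0 : i0 <= i).
  { destruct (Nat.le_gt_cases i0 i); auto. exfalso. apply (hmin i); eauto. exists k, w'; auto. }
  assert (Hi0pos : 0 < i0).
  { destruct i0; [|lia]. exfalso. pose proof (pf q Hq) as [q0 _]. rewrite q0 in h4.
    injection h4 as e. rewrite <- e in h3. apply r_idx in h3; auto. lia. }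
  pose proof (nth_some_lt _ _ _ Hs) as Ljq.
  assert (Hp : is_path G r v (firstn i0 q ++ skipn k0 u)).
  { apply glue_path with (w := w0); auto.
    intros z z1 z2. apply in_firstn_iff in z1 as [i1 [i1l i1z]].
    apply in_skipn_iff in z2 as [k1 [k1l k1z]].
    destruct (Nat.eq_dec k1 (length u - 1)).
    - subst k1. pose proof (pf u Hu) as [_ [ul _]]. rewrite ul in k1z. injection k1z as e. rewrite <- e in i1z.
      apply v_idx in i1z; auto. lia.
    - apply (hmin i1); auto. exists k1, z. pose proof (nth_some_lt _ _ _ k1z). repeat split; auto; lia. }
  destruct (proj2 (proj2 (proj2 HSsep)) _ Hp) as [z [Hz Sz]].
  apply in_app_or in Hz as [Hz|Hz].
  - apply in_firstn_iff in Hz as [i1 [i1l i1z]].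
    assert (z = s) by (eapply q_S_unique; eauto; eapply nth_error_In; eauto). subst z.
    pose proof (nodup_idx q _ _ _ (proj1 (proj2 (proj2 (pf q Hq)))) i1z Hs). lia.
  - apply in_skipn_iff in Hz as [k1 [k1l k1z]].
    pose proof (amax _ _ k1z Sz). assert (k1 = k0) by lia. subst k1.
    rewrite h3 in k1z. inversion k1z; subst z.
    assert (w0 = s) by (eapply q_S_unique; eauto; eapply nth_error_In; eauto). subst w0.
    pose proof (nodup_idx q _ _ _ (proj1 (proj2 (proj2 (pf q Hq)))) h4 Hs). lia.
Qed.

Definition Inv x := forall u, P u -> hitpt x u (x u).

Lemma Inv0 : Inv a.
Proof.
  intros u Pu. pose proof (a_spec u Pu) as [a1 [a2 [[s [Hs Ss]] amax]]].
  destruct (proj2 HQS s Ss) as [q [Qq Hsq]]. apply In_nth_error in Hsq as [j Hj].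
  exists q, j, s. repeat split; auto.
  - right. exists u, (a u). auto.
  - intros i w' Hi Hw' [e|[u' [k' [Pu' [b1 [b2 b3]]]]]].
    + rewrite e in Hw'. apply v_idx in Hw'; [|apply Qpath; auto]. pose proof (nth_some_lt _ _ _ Hj). lia.
    + apply (rs_core q j s i w' u' k'); auto; pose proof (a_spec u' Pu'); lia.
Qed.

Lemma Inv_Phi x : Bnd x -> Inv x -> Inv (Phi x).
Proof.
  intros B Iv u Pu. pose proof (Phi_bnd x B u Pu) as PB.
  assert (K : forall k, k = Phi x u -> hitpt x u k -> hitpt (Phi x) u (Phi x u)).
  { intros k ek [q [j [w [Qq [Hw Hh]]]]]. subst k. exists q, j, w. split; [auto|split; [auto|]].
    apply hit_mono with (x := x); auto. intros; apply Phi_ge.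
    right. exists u, (Phi x u). repeat split; auto; lia. }
  pose proof (Phi_ge x u) as G1. unfold Phi in G1, PB |- *.
  destruct (maxk_spec (fun k => x u <= k /\ k < length u - 1 /\ hitpt x u k) (length u) (x u))
    as [[h _]|[[_ [_ h]] _]].
  - apply (K (x u)). unfold Phi. auto. apply Iv; auto.
  - apply (K _ eq_refl h).
Qed.

Lemma Inv_xs n : Inv (xs n).
Proof. induction n; simpl. apply Inv0. apply Inv_Phi; auto. apply xs_bnd. Qed.

Lemma Inv_xinf : Inv xinf.
Proof.
  intros u Pu. destruct (Inv_xs (Nf u) u Pu) as [q [j [w [Qq [Hw Hh]]]]].
  exists q, j, w. fold (xinf u) in Hw. split; [auto|split; [auto|]].
  apply hit_mono with (x := xs (Nf u)); auto. intros; apply xs_le_xinf.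
  right. exists u, (xinf u). pose proof (xinf_bnd u Pu). repeat split; auto; lia.
Qed.

Lemma not_F_eventually w' : ~ F xinf w' -> exists N, forall n, N <= n -> ~ F (xs n) w'.
Proof.
  intros nF.
  destruct (classic (exists u' k', P u' /\ 1 <= k' /\ k' < length u' - 1 /\ nth_error u' k' = Some w'))
    as [[u' [k' [Pu' [c1 [c2 c3]]]]]|Hno].
  - exists (Nf u'). intros n Hn [u'' [k'' [Pu'' [d1 [d2 d3]]]]].
    pose proof (xs_bnd n u'' Pu'') as bb. pose proof (a_spec u'' Pu'') as aa.
    assert (w' <> r) by (intro e; rewrite e in c3; apply r_idx in c3; [lia|apply Ppath; auto]).
    assert (w' <> v) by (intro e; rewrite e in c3; apply v_idx in c3; [lia|apply Ppath; auto]).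
    destruct (on_u_unique u'' u' k'' k' w' Pu'' Pu' d3 c3) as [e1 e2]; auto. subst u'' k''.
    apply nF. exists u', k'. rewrite <- (xinf_eq u' n Hn). auto.
  - exists 0. intros n _ [u'' [k'' [Pu'' [d1 [d2 d3]]]]]. apply Hno.
    pose proof (xs_bnd n u'' Pu'') as bb. pose proof (a_spec u'' Pu'') as aa.
    exists u'', k''. repeat split; auto; lia.
Qed.

Lemma hit_eventually q j w : first_hit xinf q j w -> exists N, forall n, N <= n -> first_hit (xs n) q j w.
Proof.
  intros [h1 [h2 h3]].
  assert (K : forall m, m <= j -> exists N, forall n, N <= n -> forall i w', i < m ->
     nth_error q i = Some w' -> ~ target (xs n) w').
  { induction m as [|m IH]; intros Hm.
    - exists 0. intros; lia.
    - destruct (IH ltac:(lia)) as [N1 HN1].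
      destruct (nth_error q m) as [w'|] eqn:Em.
      + assert (nt := h3 m w' ltac:(lia) Em).
        destruct (not_F_eventually w') as [N2 HN2]. { intro; apply nt; right; auto. }
        exists (N1 + N2). intros n Hn i w'' Hi Hw''.
        destruct (Nat.eq_dec i m).
        * subst i. rewrite Em in Hw''. injection Hw'' as e. rewrite <- e.
          intros [e'|f]; [apply nt; left; auto|]. apply (HN2 n ltac:(lia)); auto.
        * apply (HN1 n ltac:(lia) i w''); auto; lia.
      + exists N1. intros n Hn i w'' Hi Hw''. destruct (Nat.eq_dec i m).
        * subst; congruence.
        * apply (HN1 n ltac:(lia) i w''); auto; lia. }
  destruct (K j (le_n _)) as [N HN]. exists N. intros n Hn. split; [auto|split].
  - destruct h2 as [e|f]; [left; auto|right]. apply F_anti with (y := xinf); auto. intros; apply xs_le_xinf.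
  - intros i w' Hi Hw'. apply (HN n Hn i w'); auto.
Qed.

Lemma fix_xinf u k : P u -> xinf u < k -> k < length u - 1 -> ~ hitpt xinf u k.
Proof.
  intros Pu Hk Hkl [q [j [w [Qq [Hw Hh]]]]].
  destruct (hit_eventually q j w Hh) as [N HN].
  set (n := N + Nf u).
  assert (T : xs n u <= k /\ k < length u - 1 /\ hitpt (xs n) u k).
  { pose proof (xs_le_xinf n u). repeat split; try lia. exists q, j, w. split; [auto|split; [auto|]].
    apply HN. unfold n; lia. }
  pose proof (maxk_ge (fun k => xs n u <= k /\ k < length u - 1 /\ hitpt (xs n) u k) (length u) (xs n u) k ltac:(lia) T) as Hge.
  change (maxk _ (length u) (xs n u)) with (xs (S n) u) in Hge.
  rewrite xinf_eq in Hge by (unfold n; lia). lia.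
Qed.

Lemma first_hit_unique x q j1 w1 j2 w2 : first_hit x q j1 w1 -> first_hit x q j2 w2 -> j1 = j2 /\ w1 = w2.
Proof.
  intros [a1 [a2 a3]] [b1 [b2 b3]].
  destruct (Nat.lt_total j1 j2) as [h|[h|h]].
  - exfalso. apply (b3 j1 w1); auto.
  - subst. split; congruence.
  - exfalso. apply (a3 j2 w2); auto.
Qed.

Lemma first_hit_exists x q : Q q -> exists j w, first_hit x q j w.
Proof.
  intros Qq. pose proof (pf q (Qpath q Qq)) as [_ [ql _]].
  destruct (least_ex (fun j => exists w, nth_error q j = Some w /\ target x w)) as [j [[w [h1 h2]] hmin]].
  { exists (length q - 1), v. split; auto. left; auto. }
  exists j, w. split; [auto|split; [auto|]]. intros i w' Hi Hw' Ht. apply (hmin i Hi). eauto.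
Qed.

Definition Rp q j w p := (w = v /\ p = q) \/
  (w <> v /\ exists u, P u /\ nth_error u (xinf u) = Some w /\ p = firstn j q ++ skipn (xinf u) u).
Definition R p := exists q j w, Q q /\ first_hit xinf q j w /\ Rp q j w p.

Lemma xinf_w_nrv u w : P u -> nth_error u (xinf u) = Some w -> w <> r /\ w <> v.
Proof.
  intros Pu Hw. apply (F_nrv xinf); [apply xinf_bnd|]. exists u, (xinf u).
  pose proof (xinf_bnd u Pu). repeat split; auto; lia.
Qed.

Lemma R_path p : R p -> is_path G r v p.
Proof.
  intros [q [j [w [Qq [Hh [[e1 e2]|[ne [u [Pu [Hw ep]]]]]]]]]].
  - subst; apply Qpath; auto.
  - subst p. destruct Hh as [h1 [h2 h3]]. pose proof (xinf_w_nrv u w Pu Hw) as [wr wv].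
    apply glue_path with (w := w); auto using Qpath, Ppath.
    + destruct j; [|lia]. exfalso. pose proof (pf q (Qpath q Qq)) as [q0 _]. congruence.
    + intros z z1 z2. apply in_firstn_iff in z1 as [i1 [i1l i1z]].
      apply in_skipn_iff in z2 as [k1 [k1l k1z]].
      apply (h3 i1 z i1l i1z).
      pose proof (pf u (Ppath u Pu)) as [_ [ul _]]. pose proof (nth_some_lt _ _ _ k1z).
      destruct (Nat.eq_dec k1 (length u - 1)).
      * subst k1. left. congruence.
      * right. exists u, k1. repeat split; auto; lia.
Qed.

Lemma R_members q j w p z : Q q -> first_hit xinf q j w -> Rp q j w p -> In z p ->
  (exists i, i <= j /\ nth_error q i = Some z) \/ z = v \/
  (exists u k, P u /\ xinf u <= k /\ k < length u - 1 /\ nth_error u k = Some z /\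
     nth_error u (xinf u) = Some w).
Proof.
  intros Qq Hh [[e1 e2]|[ne [u [Pu [Hw ep]]]]] Hz.
  - subst. left. apply In_nth_error in Hz as [i Hi]. exists i. split; auto.
    destruct Hh as [h1 _]. apply v_idx in h1; [|apply Qpath; auto].
    pose proof (nth_some_lt _ _ _ Hi). lia.
  - subst p. apply in_app_or in Hz as [Hz|Hz].
    + apply in_firstn_iff in Hz as [i [Hi Hz]]. left. exists i. split; auto; lia.
    + apply in_skipn_iff in Hz as [k [Hk Hz]]. pose proof (nth_some_lt _ _ _ Hz).
      destruct (Nat.eq_dec k (length u - 1)).
      * subst k. right; left. pose proof (pf u (Ppath u Pu)) as [_ [ul _]]. congruence.
      * right; right. exists u, k. repeat split; auto; lia.
Qed.

Lemma AC_case q1 j1 w1 q2 j2 w2 z i1 u k : Q q1 -> Q q2 -> first_hit xinf q1 j1 w1 -> first_hit xinf q2 j2 w2 ->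
  q1 <> q2 -> i1 <= j1 -> nth_error q1 i1 = Some z -> P u -> xinf u <= k -> k < length u - 1 ->
  nth_error u k = Some z -> nth_error u (xinf u) = Some w2 -> z = r \/ z = v.
Proof.
  intros Q1 Q2 H1 H2 ne Hi Hz Pu Hk Hkl Huk Huw.
  assert (Fz : F xinf z) by (exists u, k; auto).
  destruct (Nat.eq_dec i1 j1) as [e|ne'].
  - subst i1. destruct H1 as [h1 [h2 h3]]. rewrite h1 in Hz. injection Hz as ez. subst w1.
    destruct (Nat.eq_dec k (xinf u)) as [ek|nek].
    + subst k. rewrite Huk in Huw. injection Huw as ew. subst w2.
      destruct H2 as [g1 _]. eapply (proj2 HQ q1 q2 z); eauto; eapply nth_error_In; eauto.
    + exfalso. apply (fix_xinf u k Pu ltac:(lia) Hkl). exists q1, j1, z. split; [auto|split; [auto|]].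
      split; auto.
  - exfalso. destruct H1 as [_ [_ h3]]. apply (h3 i1 z ltac:(lia) Hz). right; auto.
Qed.

Lemma R_disjoint p1 p2 z : R p1 -> R p2 -> p1 <> p2 -> In z p1 -> In z p2 -> z = r \/ z = v.
Proof.
  intros [q1 [j1 [w1 [Q1 [H1 R1]]]]] [q2 [j2 [w2 [Q2 [H2 R2]]]]] ne Z1 Z2.
  assert (nq : q1 <> q2).
  { intro e. subst q2. destruct (first_hit_unique _ _ _ _ _ _ H1 H2) as [ej ew]. subst j2 w2.
    apply ne. destruct R1 as [[e1 e2]|[n1 [u1 [P1 [U1 E1]]]]];
    destruct R2 as [[f1 f2]|[n2 [u2 [P2 [U2 E2]]]]]; subst; try congruence.
    destruct (xinf_w_nrv u1 w1 P1 U1) as [wr wv].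
    destruct (on_u_unique u1 u2 _ _ w1 P1 P2 U1 U2 wr wv) as [eu _]. subst; auto. }
  destruct (R_members _ _ _ _ _ Q1 H1 R1 Z1) as [[i1 [a1 b1]]|[zv|[u1 [k1 [P1 [c1 [d1 [e1 f1]]]]]]]];
  destruct (R_members _ _ _ _ _ Q2 H2 R2 Z2) as [[i2 [a2 b2]]|[zv'|[u2 [k2 [P2 [c2 [d2 [e2 f2]]]]]]]];
  auto.
  - eapply (proj2 HQ q1 q2 z); eauto; eapply nth_error_In; eauto.
  - eapply AC_case with (q1 := q1) (q2 := q2); eauto.
  - eapply AC_case with (q1 := q2) (q2 := q1); eauto.
  - assert (Fz : F xinf z) by (exists u1, k1; auto).
    destruct (F_nrv xinf z xinf_bnd Fz) as [zr zv].
    destruct (on_u_unique u1 u2 k1 k2 z P1 P2 e1 e2 zr zv) as [eu ek]. subst u2 k2.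
    rewrite f1 in f2. injection f2 as ew. subst w2.
    destruct (xinf_w_nrv u1 w1 P1 f1) as [wr wv]. exfalso.
    destruct H1 as [g1 _]. destruct H2 as [g2 _].
    destruct (proj2 HQ q1 q2 w1 Q1 Q2 nq) as [h|h]; auto; eapply nth_error_In; eauto.
Qed.

Lemma hit_after_S q s js j w : Q q -> nth_error q js = Some s -> SS s -> first_hit xinf q j w -> js <= j.
Proof.
  intros Qq Hs Ss [h1 [h2 h3]]. destruct (Nat.le_gt_cases js j); auto. exfalso.
  destruct h2 as [e|f].
  - rewrite e in h1. apply v_idx in h1; [|apply Qpath; auto]. pose proof (nth_some_lt _ _ _ Hs). lia.
  - assert (Fa : F a w) by (apply F_anti with (y := xinf); auto; intros u; apply (xs_le_xinf 0 u)).
    destruct Fa as [u [k [Pu [b1 [b2 b3]]]]].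
    apply (rs_core q js s j w u k); auto.
Qed.

Lemma s_in_p q j w p s js : Q q -> first_hit xinf q j w -> Rp q j w p ->
  nth_error q js = Some s -> SS s -> In s p.
Proof.
  intros Qq Hh Rq Hs Ss. pose proof (hit_after_S q s js j w Qq Hs Ss Hh) as Hle.
  destruct Rq as [[e1 e2]|[ne [u [Pu [Hw ep]]]]].
  - subst. eapply nth_error_In; eauto.
  - subst p. apply in_or_app. destruct (Nat.eq_dec js j).
    + subst js. right. destruct Hh as [h1 _]. rewrite h1 in Hs. injection Hs as e. subst s.
      apply in_skipn_iff. exists (xinf u). auto.
    + left. apply in_firstn_iff. exists js. split; auto; lia.
Qed.

Lemma S_in_p_on_q q j w p z : Q q -> first_hit xinf q j w -> Rp q j w p -> In z p -> SS z -> In z q.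
Proof.
  intros Qq Hh Rq Hz Sz.
  destruct Rq as [[e1 e2]|[ne [u [Pu [Hw ep]]]]].
  - subst; auto.
  - subst p. apply in_app_or in Hz as [Hz|Hz].
    + apply in_firstn_iff in Hz as [i [_ Hi]]. eapply nth_error_In; eauto.
    + apply in_skipn_iff in Hz as [k [Hk Hz]].
      pose proof (a_spec u Pu) as [_ [_ [_ amax]]]. pose proof (amax _ _ Hz Sz).
      pose proof (xinf_bnd u Pu). assert (k = xinf u) by lia. subst k.
      rewrite Hw in Hz. injection Hz as e. subst z. destruct Hh as [h1 _]. eapply nth_error_In; eauto.
Qed.

Lemma R_orth : orthogonal R SS.
Proof.
  split.
  - intros p [q [j [w [Qq [Hh Rq]]]]].
    destruct (proj1 HQS q Qq) as [s [[Hsq Ss] _]].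
    apply In_nth_error in Hsq as [js Hjs].
    exists s. split.
    + split; auto. eapply s_in_p; eauto.
    + intros z [Hz Sz]. eapply q_S_unique; eauto. eapply nth_error_In; eauto.
      eapply S_in_p_on_q; eauto.
  - intros s Ss. destruct (proj2 HQS s Ss) as [q [Qq Hsq]].
    apply In_nth_error in Hsq as [js Hjs].
    destruct (first_hit_exists xinf q Qq) as [j [w Hh]].
    assert (Rq : exists p, Rp q j w p).
    { destruct (classic (w = v)) as [e|ne].
      - exists q. left; auto.
      - pose proof Hh as [h1 [[e|Fw] h3]]; [congruence|].
        destruct Fw as [u [k [Pu [b1 [b2 b3]]]]].
        assert (k = xinf u).
        { destruct (Nat.eq_dec k (xinf u)); auto. exfalso.
          apply (fix_xinf u k Pu ltac:(lia) b2). exists q, j, w. auto. }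
        subst k. exists (firstn j q ++ skipn (xinf u) u). right. split; auto. exists u. auto. }
    destruct Rq as [p Rq]. exists p. split.
    + exists q, j, w. auto.
    + eapply s_in_p; eauto.
Qed.

Lemma R_Eplus e : Eplus P e -> Eplus R e.
Proof.
  intros [u [Pu [l El]]].
  destruct (Inv_xinf u Pu) as [q [j [w [Qq [Hw Hh]]]]].
  pose proof (xinf_w_nrv u w Pu Hw) as [wr wv].
  exists (firstn j q ++ skipn (xinf u) u). split.
  - exists q, j, w. split; [auto|split; [auto|]]. right. split; auto. exists u. auto.
  - pose proof (xinf_bnd u Pu) as bb. exists (firstn j q ++ skipn (xinf u) l).
    rewrite El in bb |- *. rewrite length_app in bb. simpl in bb.
    rewrite skipn_app. replace (xinf (l ++ [fst e; snd e]) - length l) with 0 by lia.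
    simpl. rewrite app_assoc. reflexivity.
Qed.

Theorem main_sec : exists R0 : list V -> Prop,
  path_system G r v R0 /\ orthogonal R0 SS /\ forall e, Eplus P e -> Eplus R0 e.
Proof.
  exists R. split; [split|split].
  - apply R_path.
  - intros p q z H1 H2 H3 H4 H5. apply (R_disjoint p q z); auto.
  - apply R_orth.
  - apply R_Eplus.
Qed.

End Main.

Theorem lemma2p4 (V : Type) (E : V -> V -> Prop) (r v : V)
  (Hloop : loopless E) (Hv : v <> r)
  (I : V * V -> Prop) (HI : calG (del_edge E r v) r v I)
  (S : V -> Prop) (HS : frakS E r v S) :
  exists R : list V -> Prop,
    frakP E r v R /\ orthogonal R S /\ (forall e, I e -> Eplus R e).
Proof.
  destruct HI as [_ [P [HP HIP]]].
  destruct HS as [HSsep [Q [HQ HQS]]].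
  assert (Hrv : r <> v) by (intro e; apply Hv; auto).
  destruct (main_sec (del_edge E r v) r v Hrv S HSsep Q HQ HQS P HP) as [R0 [H1 [H2 H3]]].
  exists R0. split; [|split].
  - split; auto. exists S. split; auto.
  - auto.
  - intros e Ie. apply H3. apply HIP. auto.
Qed.
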